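(* Let $t$ be a positive integer, $w\ge\lceil (t+1)/2\rceil$ an integer, and $V$ a voter matrix with $t$ topics and $n$ voters such that $md_V<w$. For $l=0,\dots,t$ let $v_l$ be the number of rows of $V$ with exactly $l$ entries $Y$. Then for every $k=w,\dots,t$, $$s_{k,0}v_0+s_{k,1}v_1+\dots+s_{k,t}v_t\le s_{k,t}\left\lfloor\frac{n-1}{2}\right\rfloor.$$
   Context: A voter matrix with $t$ topics is a matrix $V\in\{Y,N\}^{n\times t}$ for some positive integer $n$ (rows are voters), subject to the standing assumption that in every column the number of entries $Y$ is at least the number of entries $N$. A proposal is a vector in $\{Y,N\}^t$; a $k$-proposal is one with exactly $k$ entries $Y$, and an $l$-voter is a vector (row) with exactly $l$ entries $Y$. A voter $v$ supports a proposal $p$ if the Hamming distance between $v$ and $p$ is at most $t/2$; $p$ is supported by $V$ if at least $n/2$ rows of $V$ support $p$. $md_V$ is the maximum number of entries $Y$ of a proposal supported by $V$. $s_{k,l}$ denotes the number of $k$-proposals supported by a given $l$-voter (independent of the choice of $l$-voter). *)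

(* Defs.v *)
(* Y is encoded as [true], N as [false]. *)
From mathcomp Require Import all_boot.
Set Implicit Arguments. Unset Strict Implicit. Unset Printing Implicit Defensive.

Definition vote (t : nat) := {ffun 'I_t -> bool}.

Definition numY (t : nat) (p : vote t) : nat := #|[set i | p i]|.

Definition hamming (t : nat) (v p : vote t) : nat := #|[set i | v i != p i]|.

(* voter v supports p iff dist(v,p) <= t/2, i.e. 2*dist <= t *)
Definition supports (t : nat) (v p : vote t) : bool := (hamming v p).*2 <= t.

Definition voter_matrix (t n : nat) (V : 'I_n -> vote t) : Prop :=
  0 < n /\
  forall j : 'I_t, #|[set r | ~~ V r j]| <= #|[set r | V r j]|.

Definition supported (t n : nat) (V : 'I_n -> vote t) (p : vote t) : bool :=
  n <= (#|[set r | supports (V r) p]|).*2.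

(* md_V < w : every supported proposal has fewer than w entries Y *)
Definition md_lt (t n : nat) (V : 'I_n -> vote t) (w : nat) : Prop :=
  forall p : vote t, supported V p -> numY p < w.

Definition canon_voter (t l : nat) : vote t := [ffun i : 'I_t => i < l].

(* s_{k,l}: number of k-proposals supported by (a given, here the canonical) l-voter *)
Definition s (t k l : nat) : nat :=
  #|[set p : vote t | (numY p == k) && supports (canon_voter t l) p]|.

Definition vcount (t n : nat) (V : 'I_n -> vote t) (l : nat) : nat :=
  #|[set r | numY (V r) == l]|.

(* Main.v *)
Require Import Defs.
From mathcomp Require Import all_boot.
From mathcomp Require Import fingroup perm zify.
Set Implicit Arguments. Unset Strict Implicit. Unset Printing Implicit Defensive.

Lemma key (t : nat) (v : vote t) :
  exists sg : {perm 'I_t}, forall i, v (sg i) = (i < numY v).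
Proof.
set A := [set i | v i].
set s1 := enum A ++ enum (~: A).
have Hsz : size s1 = t.
  by rewrite size_cat -!cardE cardsC card_ord.
have Hu : uniq s1.
  rewrite cat_uniq !enum_uniq /= andbT; apply/hasPn => x.
  by rewrite !mem_enum inE => ->.
have Hn : forall i j : 'I_t, nth i s1 j = nth j s1 j.
  by move=> i j; apply: set_nth_default; rewrite Hsz.
have finj : injective (fun i : 'I_t => nth i s1 i).
  move=> i j /= E; apply: val_inj => /=; apply/eqP.
  rewrite -(nth_uniq i _ _ Hu) ?Hsz //. by rewrite E Hn.
exists (perm finj) => i; rewrite permE.
rewrite /s1 nth_cat -cardE /numY -/A.
case: ifP => Hi.
  have : nth i (enum A) i \in enum A by apply: mem_nth; rewrite -cardE.
  by rewrite mem_enum inE.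
have : nth i (enum (~: A)) (i - #|A|) \in enum (~:A).
  apply: mem_nth; rewrite -cardE.
  have := cardsC A; rewrite card_ord => H. have := ltn_ord i. move: (negbT Hi); rewrite -leqNgt => Hle _. by rewrite ltn_subLR // H.
by rewrite mem_enum !inE => /negbTE.
Qed.

Lemma s_inv (t k : nat) (v : vote t) :
  #|[set p : vote t | (numY p == k) && supports v p]| = s t k (numY v).
Proof.
have [sg Hsg] := key v.
pose g (p : vote t) : vote t := [ffun i => p (sg i)].
have ginj : injective g.
  move=> p q E; apply/ffunP => j.
  have := congr1 (fun f : vote t => f ((sg^-1)%g j)) E.
  by rewrite /g !ffunE permKV.
have HnumY : forall p, numY (g p) = numY p.
  move=> p; rewrite /numY -[RHS](card_preimset _ (@perm_inj _ sg)).
  apply: eq_card => i; by rewrite !inE ffunE.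
have Hham : forall p q, hamming (g p) (g q) = hamming p q.
  move=> p q; rewrite /hamming -[RHS](card_preimset _ (@perm_inj _ sg)).
  apply: eq_card => i; by rewrite !inE !ffunE.
have Hc : g v = canon_voter t (numY v).
  by apply/ffunP => i; rewrite !ffunE Hsg.
rewrite /s -Hc -[RHS](card_preimset _ ginj).
apply: eq_card => p; rewrite !inE HnumY /supports Hham //.
Qed.

Theorem lemma4p5 (t w n : nat) (V : 'I_n -> vote t) :
  0 < t -> (t.+2)./2 <= w ->
  voter_matrix V -> md_lt V w ->
  forall k, w <= k <= t ->
  \sum_(l < t.+1) s t k l * vcount V l <= s t k t * ((n - 1)./2).
Proof.
move=> t0 Hw _ Hmd k /andP [Hwk Hkt].
have E1 : \sum_(l < t.+1) s t k l * vcount V l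
          = \sum_(r < n) s t k (numY (V r)).
  transitivity (\sum_(l < t.+1) \sum_(r < n) (numY (V r) == l) * s t k l).
    apply: eq_bigr => l _; rewrite /vcount -sum1_card big_mkcond /= big_distrr /=.
    by apply: eq_bigr => r _; rewrite inE; case: eqP; rewrite ?muln1 ?muln0 ?mul1n ?mul0n.
  rewrite exchange_big /=; apply: eq_bigr => r _.
  have Hle : numY (V r) < t.+1.
    rewrite ltnS /numY; apply: leq_trans (max_card _) _; by rewrite card_ord.
  rewrite (bigD1 (Ordinal Hle)) //= eqxx mul1n big1 ?addn0 // => l Hl.
  case: eqP => // E; exfalso; move/eqP: Hl; apply; apply: val_inj => /=; by rewrite E.
rewrite E1.
under eq_bigr => r _ do rewrite -s_inv.
have E2 : \sum_(r < n) #|[set p : vote t | (numY p == k) && supports (V r) p]|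
   = \sum_(p : vote t | numY p == k) #|[set r | supports (V r) p]|.
  transitivity (\sum_(r < n) \sum_(p : vote t | numY p == k) (supports (V r) p : nat)).
    apply: eq_bigr => r _; rewrite -sum1_card big_mkcond /= [RHS]big_mkcond /=.
    by apply: eq_bigr => p _; rewrite inE; case: (numY p == k); case: (supports _ _).
  rewrite exchange_big /=; apply: eq_bigr => p _.
  by rewrite -sum1_card [RHS]big_mkcond /=; apply: eq_bigr => r _; rewrite inE; case: (supports _ _).
rewrite E2.
have Hst : s t k t = #|[set p : vote t | numY p == k]|.
  rewrite /s; apply: eq_card => p; rewrite !inE.
  case E: (numY p == k) => //=.
  rewrite /supports /hamming.
  have -> : [set i | canon_voter t t i != p i] = ~: [set i | p i].
    by apply/setP => i; rewrite !inE ffunE ltn_ord.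
  have := cardsC [set i | p i]; rewrite card_ord -/(numY p) (eqP E) => H.
  have : t.+2./2 <= k by apply: leq_trans Hwk.
  rewrite -divn2 => H2.
  apply/leP; rewrite -!(rwP leP) in H2 *. lia.
rewrite Hst -sum1_card big_distrl /= mul1n.
rewrite [X in _ <= X](eq_bigl (fun p : vote t => numY p == k)); last by move=> p; rewrite inE.
apply: leq_sum => p /eqP Hp.
have : ~~ supported V p.
  apply/negP => /Hmd; rewrite Hp ltnNge Hwk //.
rewrite /supported -ltnNge => H; rewrite -divn2.
have H' : (#|[set r | supports (V r) p]|).*2 < n by [].
rewrite -muln2 in H'. move: H'. move: (#|_|) => x. lia.
Qed.
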